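(* For every $\varepsilon>0$ the following holds. Let $F\in\mathcal{F}_E$ be an $r$-graph and let $D$ be its diameter. For the class consisting of all input $r$-graphs $G$ with average degree $d$ and maximum degree $\Delta(G)=O(d)$, there exists an $\varepsilon$-tester for $F$-freeness with $O_\varepsilon(d^{D})$ queries.
   Context: Distances in an $r$-graph: a path between $u$ and $v$ is a sequence of edges whose vertices admit a labelling $u,v_1,\dots,v_k,v$ with consecutive vertices in a common edge and each edge consisting of consecutive vertices; $\mathrm{dist}(u,v)$ is the minimum number of edges of such a path ($0$ if $u=v$), $\mathrm{dist}(S,T):=\min_{s\in S,t\in T}\mathrm{dist}(s,t)$, and the diameter $D_F$ is the maximum distance between two vertices. For an edge $e\in F$ let $V_i(e):=\{u\in V(F):\mathrm{dist}(e,u)=i\}$ for $i\in[D_F]$, and $F[S]$ the set of edges of $F$ contained in $S$. $\mathcal{F}_E:=\{F:|F[V_{D_F}(e)]|=0\text{ for all }e\in F\}$. Testing model: the input $r$-graph $G$ with $m$ edges has a fixed ordering of the edges at each vertex; queries are vertex-set queries and neighbour queries (the $i$-th edge at vertex $v$). $G$ is $\varepsilon$-far from $F$-free if at least $\varepsilon m$ edges must be added or deleted to make it $F$-free. A tester accepts $F$-free inputs with probability $\ge2/3$ and rejects far inputs with probability $\ge2/3$; an $\varepsilon$-tester is valid for all distance parameters $\varepsilon'\ge\varepsilon$. $O_\varepsilon$ allows dependence on $\varepsilon$ (and $F$) but not on $n$. *)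

(* Defs.v *)
From HB Require Import structures.
From mathcomp Require Import all_boot all_order all_algebra.
From mathcomp Require Import reals.
Set Implicit Arguments. Unset Strict Implicit. Unset Printing Implicit Defensive.
Import Order.TTheory GRing.Theory Num.Theory.
Local Open Scope ring_scope.

Definition uniform (V : finType) (r : nat) (E : {set {set V}}) : Prop :=
  forall e, e \in E -> #|e| = r.

(* es is a sequence of edges, w a labelling (injective enumeration) of the
   vertices of these edges, starting at u and ending at v, such that
   consecutive vertices lie in a common edge of es and each edge of es is a
   block of consecutive vertices of w. *)
Definition path_ok (V : finType) (E : {set {set V}}) (u v : V)
    (es : seq {set V}) (w : seq V) : Prop :=
  [/\ all (fun e => e \in E) es /\ uniq w,
      [/\ (0 < size w)%N, nth u w 0 = u & last u w = v],
      (forall x, (x \in w) = has (fun e : {set V} => x \in e) es),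
      (forall i, (i.+1 < size w)%N ->
         exists2 e, e \in es & (nth u w i \in e) && (nth u w i.+1 \in e)) &
      (forall e, e \in es -> exists i j : nat,
         forall x, (x \in e) = (x \in w) && (i <= index x w < j)%N)].

Definition pathlen (V : finType) (E : {set {set V}}) (u v : V) (k : nat) : Prop :=
  (u = v /\ k = 0%N) \/ exists es w, path_ok E u v es w /\ size es = k.

Definition dist_is (V : finType) (E : {set {set V}}) (u v : V) (k : nat) : Prop :=
  pathlen E u v k /\ forall k', pathlen E u v k' -> (k <= k')%N.

Definition setdist_is (V : finType) (E : {set {set V}}) (S : {set V}) (u : V)
    (k : nat) : Prop :=
  (exists2 s, s \in S & dist_is E s u k) /\
  forall s k', s \in S -> dist_is E s u k' -> (k <= k')%N.

Definition hconnected (V : finType) (E : {set {set V}}) : Prop :=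
  forall u v : V, exists k, pathlen E u v k.

Definition diam_is (V : finType) (E : {set {set V}}) (D : nat) : Prop :=
  (exists u v, dist_is E u v D) /\ forall u v k, dist_is E u v k -> (k <= D)%N.

(* F in F_E : for every edge e, F[V_{D_F}(e)] has no edges *)
Definition in_FE (V : finType) (E : {set {set V}}) : Prop :=
  forall D, diam_is E D -> forall e f, e \in E -> f \in E ->
    ~ (forall x, x \in f -> setdist_is E e x D).

Definition contains_copy (V : finType) (F : {set {set V}}) (n : nat)
    (G : {set {set 'I_n}}) : Prop :=
  exists f : V -> 'I_n, injective f /\ forall e, e \in F -> f @: e \in G.

Definition Ffree (V : finType) (F : {set {set V}}) (n : nat)
    (G : {set {set 'I_n}}) : Prop := ~ contains_copy F G.

Definition far (R : realType) (eps : R) (r : nat) (V : finType)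
    (F : {set {set V}}) (n : nat) (G : {set {set 'I_n}}) : Prop :=
  forall H : {set {set 'I_n}}, uniform r H -> Ffree F H ->
    eps * #|G|%:R <= (#|G :\: H| + #|H :\: G|)%:R.

Definition deg (n : nat) (G : {set {set 'I_n}}) (v : 'I_n) : nat :=
  #|[set e in G | v \in e]|.

Definition avgdeg (R : realType) (n : nat) (G : {set {set 'I_n}}) : R :=
  (\sum_(v : 'I_n) (deg G v)%:R) / n%:R.

Definition maxdeg (n : nat) (G : {set {set 'I_n}}) : nat :=
  \max_(v : 'I_n) deg G v.

(* The fixed ordering of the edges at each vertex: ord v lists, without
   repetition, exactly the edges of G containing v. *)
Definition valid_order (n : nat) (G : {set {set 'I_n}})
    (ord : 'I_n -> seq {set 'I_n}) : Prop :=
  forall v, uniq (ord v) /\ forall e, (e \in ord v) = (e \in G) && (v \in e).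

(* Randomized adaptive query algorithms (decision trees). *)
Inductive alg (n : nat) : Type :=
  | Ret of bool
  | QSet of {set 'I_n} & (bool -> alg n)                 (* is S an edge? *)
  | QNb of 'I_n & nat & (option {set 'I_n} -> alg n)     (* i-th edge at v *)
  | QRand (k : nat) of ('I_k.+1 -> alg n).                (* uniform random choice *)

Definition nb_answer (n : nat) (ord : 'I_n -> seq {set 'I_n}) (v : 'I_n) (i : nat)
  : option {set 'I_n} :=
  if (i < size (ord v))%N then Some (nth set0 (ord v) i) else None.

Fixpoint acc_prob (R : realType) (n : nat) (G : {set {set 'I_n}})
    (ord : 'I_n -> seq {set 'I_n}) (A : alg n) : R :=
  match A with
  | Ret b => if b then 1 else 0
  | QSet T k => acc_prob R G ord (k (T \in G))
  | QNb v i k => acc_prob R G ord (k (nb_answer ord v i))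
  | QRand k f => (\sum_(j : 'I_k.+1) acc_prob R G ord (f j)) / k.+1%:R
  end.

Fixpoint nqueries (n : nat) (A : alg n) : nat :=
  match A with
  | Ret _ => 0
  | QSet _ k => (maxn (nqueries (k true)) (nqueries (k false))).+1
  | QNb _ _ k => (\max_(o : option {set 'I_n}) nqueries (k o)).+1
  | QRand k f => \max_(j : 'I_k.+1) nqueries (f j)
  end.

(* Main.v *)
Require Import Defs.
From HB Require Import structures.
From mathcomp Require Import all_boot all_order all_algebra.
From mathcomp Require Import reals.
From mathcomp Require Import zify ring lra.
From Stdlib Require Classical_Prop.
Import Order.TTheory GRing.Theory Num.Theory.
Local Open Scope ring_scope.

Set Implicit Arguments. Unset Strict Implicit. Unset Printing Implicit Defensive.

Section Alg.
Variable n : nat.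

Fixpoint subst (A B : alg n) : alg n :=
  match A with
  | Ret b => if b then B else Ret n false
  | QSet T k => QSet T (fun b => subst (k b) B)
  | QNb v i k => QNb v i (fun o => subst (k o) B)
  | QRand k f => QRand (fun j => subst (f j) B)
  end.

Variable R : realType.
Variable G : {set {set 'I_n}}.
Variable ord : 'I_n -> seq {set 'I_n}.

Lemma acc_subst A B :
  acc_prob R G ord (subst A B) = acc_prob R G ord A * acc_prob R G ord B.
Proof.
elim: A => [[]|T k IH|v i k IH|k f IH] /=; rewrite ?mul1r ?mul0r //.
under eq_bigr => j _ do rewrite IH.
by rewrite -mulr_suml mulrAC.
Qed.

Lemma acc_ge0 A : 0 <= acc_prob R G ord A.
Proof.
elim: A => [[]|T k IH|v i k IH|k f IH] //=.
by apply: divr_ge0 => //; apply: sumr_ge0 => j _.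
Qed.

Lemma acc_le1 A : acc_prob R G ord A <= 1.
Proof.
elim: A => [[]|T k IH|v i k IH|k f IH] //=.
rewrite ler_pdivrMr ?ltr0Sn // mul1r.
apply: le_trans (ler_sum _ (fun j _ => IH j)) _.
by rewrite sumr_const card_ord.
Qed.

Lemma nq_subst A B : (nqueries (subst A B) <= nqueries A + nqueries B)%N.
Proof.
elim: A => [[]|T k IH|v i k IH|k f IH] //=.
- have h1 := IH true; have h2 := IH false; lia.
- rewrite addSn ltnS; apply/bigmax_leqP => o _.
  apply: leq_trans (IH o) _; rewrite leq_add2r; exact: (leq_bigmax o).
- apply/bigmax_leqP => o _.
  apply: leq_trans (IH o) _; rewrite leq_add2r; exact: (leq_bigmax o).
Qed.

Fixpoint qlist (qs : seq ('I_n * nat))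
    (cont : seq (option {set 'I_n}) -> alg n) : alg n :=
  match qs with
  | [::] => cont [::]
  | q :: qs' => QNb q.1 q.2 (fun o => qlist qs' (fun os => cont (o :: os)))
  end.

Lemma acc_qlist qs cont :
  acc_prob R G ord (qlist qs cont) =
  acc_prob R G ord (cont [seq nb_answer ord q.1 q.2 | q <- qs]).
Proof. by elim: qs cont => //= q qs IH cont; rewrite IH. Qed.

Lemma nq_qlist qs cont b :
  (forall os, size os = size qs -> (nqueries (cont os) <= b)%N) ->
  (nqueries (qlist qs cont) <= size qs + b)%N.
Proof.
elim: qs cont => [|q qs IH] cont H /=; first by rewrite add0n; apply: H.
rewrite addSn ltnS; apply/bigmax_leqP => o _; apply: IH => os Hs.
by apply: H; rewrite /= Hs.
Qed.

Variables r K : nat.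

Definition qsof (L : seq 'I_n) : seq ('I_n * nat) :=
  [seq (v, i) | v <- L, i <- iota 0 K].
Definition edgs (os : seq (option {set 'I_n})) : seq {set 'I_n} :=
  filter (fun e : {set 'I_n} => #|e| == r) (pmap id os).
Definition verts os : seq 'I_n := flatten (map (fun e : {set 'I_n} => enum e) (edgs os)).

Fixpoint explore (j : nat) (L : seq 'I_n) (Ec : seq {set 'I_n})
    (cont : seq {set 'I_n} -> alg n) : alg n :=
  match j with
  | 0 => cont Ec
  | j'.+1 => qlist (qsof L)
      (fun os => explore j' (L ++ verts os) (Ec ++ edgs os) cont)
  end.

Definition answers (L : seq 'I_n) := [seq nb_answer ord q.1 q.2 | q <- qsof L].

Fixpoint exres (j : nat) (L : seq 'I_n) (Ec : seq {set 'I_n}) : seq {set 'I_n} :=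
  match j with
  | 0 => Ec
  | j'.+1 => exres j' (L ++ verts (answers L)) (Ec ++ edgs (answers L))
  end.

Lemma acc_explore j L Ec cont :
  acc_prob R G ord (explore j L Ec cont) = acc_prob R G ord (cont (exres j L Ec)).
Proof. by elim: j L Ec => //= j IH L Ec; rewrite acc_qlist IH. Qed.

Lemma size_verts os : (size (verts os) <= r * size os)%N.
Proof.
elim: os => [|o os IH]; first by [].
have E : verts (o :: os) =
   (if o is Some e then (if #|e| == r then enum e else [::]) else [::]) ++ verts os.
  by case: o => [e|] //=; rewrite /verts /edgs /=; case: ifP.
rewrite E size_cat mulnS; case: o {E} => [e|] /=; last by apply: leq_trans IH (leq_addl _ _).
case: eqP => He /=; last by apply: leq_trans IH (leq_addl _ _).
by rewrite -cardE He leq_add2l.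
Qed.

Fixpoint qb j : nat := if j is j'.+1 then (K + (1 + r * K) * qb j')%N else 0%N.

Lemma nq_explore j L Ec cont b :
  (forall E, (nqueries (cont E) <= b)%N) ->
  (nqueries (explore j L Ec cont) <= size L * qb j + b)%N.
Proof.
move=> Hc; elim: j L Ec => [|j IH] L Ec /=; first by rewrite muln0 add0n.
apply: leq_trans (nq_qlist (b := (size L * (1 + r * K) * qb j + b)%N) _) _.
  move=> os Hs; apply: leq_trans (IH _ _) _; rewrite leq_add2r leq_mul2r.
  apply/orP; right; rewrite size_cat.
  have := size_verts os; rewrite Hs /qsof size_allpairs size_iota; nia.
rewrite /qsof size_allpairs size_iota; nia.
Qed.

Lemma qb_bound j : (r * qb j + 1 <= (1 + r * K) ^ j)%N.
Proof.
elim: j => [|j IH]; first by rewrite /= muln0.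
rewrite expnS /=.
have -> : (r * (K + (1 + r * K) * qb j) + 1 = (1 + r * K) * (r * qb j + 1))%N by ring.
by rewrite leq_mul2l IH orbT.
Qed.

End Alg.

Fixpoint hopf (T : finType) (E : {set {set T}}) (k : nat) (u y : T) {struct k} : Prop :=
  if k is k'.+1 then hopf E k' u y \/
     exists2 g, g \in E & (u \in g /\ exists2 z, z \in g & hopf E k' z y)
  else u = y.

Fixpoint hopb (T : finType) (E : {set {set T}}) (k : nat) (u y : T) {struct k} : Prop :=
  if k is k'.+1 then hopb E k' u y \/
     exists2 g, g \in E & (y \in g /\ exists2 z, z \in g & hopb E k' u z)
  else u = y.

Section Sem.
Variables (n r K : nat) (G : {set {set 'I_n}}) (ord : 'I_n -> seq {set 'I_n}).
Hypotheses (Hval : valid_order G ord) (Hunif : uniform r G)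
  (HK : forall v, (size (ord v) <= K)%N).

Lemma answers_inG L e : Some e \in answers ord K L -> e \in G.
Proof.
case/mapP => [[v i] _ /=]; rewrite /nb_answer; case: ifP => // Hi [->].
have [_ Hm] := Hval v.
have : nth set0 (ord v) i \in ord v by rewrite mem_nth.
by rewrite Hm => /andP[].
Qed.

Lemma edgs_inG L e : e \in edgs r (answers ord K L) -> e \in G.
Proof.
rewrite /edgs mem_filter => /andP[_]; rewrite mem_pmap map_id; exact: answers_inG.
Qed.

Lemma exres_mono j L Ec e : e \in Ec -> e \in exres ord r K j L Ec.
Proof. by elim: j L Ec => //= j IH L Ec He; apply: IH; rewrite mem_cat He. Qed.

Lemma exres_inG j L Ec : {subset Ec <= G} -> {subset exres ord r K j L Ec <= G}.
Proof.
elim: j L Ec => //= j IH L Ec H; apply: IH => e; rewrite mem_cat => /orP[/H//|].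
exact: edgs_inG.
Qed.

Lemma round_edge L v g : v \in L -> g \in G -> v \in g -> g \in edgs r (answers ord K L).
Proof.
move=> Hv Hg Hvg; have [_ Hm] := Hval v.
have gin : g \in ord v by rewrite Hm Hg Hvg.
have Hi : (index g (ord v) < size (ord v))%N by rewrite index_mem.
rewrite /edgs mem_filter (Hunif Hg) eqxx /= mem_pmap map_id.
apply/mapP; exists (v, index g (ord v)).
  rewrite /qsof; apply: allpairs_f => //; rewrite mem_iota leq0n add0n /=.
  exact: leq_trans Hi (HK v).
by rewrite /= /nb_answer Hi nth_index.
Qed.

Lemma round_vert L v g y :
  v \in L -> g \in G -> v \in g -> y \in g -> y \in verts r (answers ord K L).
Proof.
move=> Hv Hg Hvg Hy; rewrite /verts; apply/flattenP.
exists (enum g); last by rewrite mem_enum.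
apply: (map_f (fun e : {set 'I_n} => enum e)); exact: (round_edge Hv Hg Hvg).
Qed.

Lemma exres_reach j L Ec k u y g :
  u \in L -> hopf G k u y -> (k < j)%N -> g \in G -> y \in g ->
  g \in exres ord r K j L Ec.
Proof.
elim: j L Ec k u => [|j IH] L Ec k u Hu Hh Hk Hg Hy; first by rewrite ltn0 in Hk.
rewrite /=.
case: k Hh Hk => [|k] /= Hh Hk.
  subst u; apply: exres_mono; by rewrite mem_cat (round_edge Hu Hg Hy) orbT.
have Hk' : (k < j)%N by rewrite -ltnS.
case: Hh => [Hh|[g1 Hg1 [Hu1 [z Hz Hh]]]].
  by apply: (IH _ _ k u) => //; rewrite mem_cat Hu.
by apply: (IH _ _ k z) => //; rewrite mem_cat (round_vert Hu Hg1 Hu1 Hz) orbT.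
Qed.

End Sem.

Section Hop.
Variables (T : finType) (E : {set {set T}}).

Lemma hopf_step k u z g y :
  hopf E k u z -> g \in E -> z \in g -> y \in g -> hopf E k.+1 u y.
Proof.
elim: k u => [|k IH] u /= H Hg Hz Hy.
  by subst u; right; exists g => //; split => //; exists y.
case: H => [H|[g1 Hg1 [Hu1 [z1 Hz1 H]]]].
  by left; exact: IH H Hg Hz Hy.
by right; exists g1 => //; split => //; exists z1 => //; exact: IH H Hg Hz Hy.
Qed.

Lemma hopb_hopf k u y : hopb E k u y -> hopf E k u y.
Proof.
elim: k y => [|k IH] y /=; first by [].
case=> [H|[g Hg [Hy [z Hz H]]]]; first by left; exact: IH.
exact: (hopf_step (IH _ H) Hg Hz Hy).
Qed.

Lemma hopb_mono k k' u y : (k <= k')%N -> hopb E k u y -> hopb E k' u y.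
Proof.
move/subnK <-; elim: (k' - k)%N => [|m IH] H; first by rewrite add0n.
by rewrite addSn /=; left; exact: IH.
Qed.

Lemma count_lt (S : eqType) (a b : pred S) s x :
  subpred a b -> x \in s -> b x -> ~~ a x -> (count a s < count b s)%N.
Proof.
move=> Hab; elim: s => // y s IH; rewrite in_cons => /orP[/eqP <-|Hx] Hb Ha /=.
  by rewrite Hb (negbTE Ha) add0n add1n ltnS; exact: sub_count.
have := IH Hx Hb Ha; case Hay: (a y); first by rewrite (Hab _ Hay); lia.
by case: (b y); lia.
Qed.

Lemma path_hopb s x es w :
  (forall g, g \in E -> g != set0) -> path_ok E s x es w -> hopb E (size es) s x.
Proof.
move=> Hne [[Hes Hu] [Hw0 Hn0 Hlast] Hmem Hcons _].
pose ig (g : {set T}) := find (fun y => y \in g) w.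
pose c (g : {set T}) := count (fun g' => (ig g' <= ig g)%N) es.
have Hin g y : g \in es -> y \in g -> y \in w.
  by move=> Hg Hy; rewrite Hmem; apply/hasP; exists g.
have Hhas g : g \in es -> has (fun y => y \in g) w.
  move=> Hg; have /set0Pn [y Hy] := Hne g (allP Hes g Hg).
  by apply/hasP; exists y => //; exact: Hin Hy.
have key : forall N g, g \in es -> (ig g <= N)%N -> forall y, y \in g -> hopb E (c g) s y.
  elim=> [|N IHN] g Hg HN y Hy.
    have Hs0 : nth s w (ig g) \in g by exact: (nth_find s (Hhas g Hg)).
    move: HN; rewrite leqn0 => /eqP H0; rewrite H0 Hn0 in Hs0.
    apply: (@hopb_mono 1).
      rewrite -has_count; apply/hasP; exists g => //=.
    by right; exists g; [exact: (allP Hes g Hg) | split => //; exists s].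
  case: (leqP (ig g) N) => HgN; first exact: IHN.
  have HgE : ig g = N.+1 by apply/eqP; rewrite eqn_leq HN HgN.
  have Hlt : (ig g < size w)%N by rewrite /ig -has_find; exact: Hhas.
  rewrite HgE in Hlt.
  have [g' Hg' /andP [H1 H2]] := Hcons N Hlt.
  have Hig' : (ig g' <= N)%N.
    rewrite /ig leqNgt; apply/negP => Hc.
    by have := before_find s Hc; rewrite /= H1.
  have Hw : nth s w N.+1 \in g.
    by have := (nth_find s (Hhas g Hg) : nth s w (ig g) \in g); rewrite HgE.
  have IH' := IHN g' Hg' Hig' _ H2.
  apply: (@hopb_mono (c g').+1).
    apply: (count_lt (x := g)) => //=.
    - move=> g'' /= H; apply: leq_trans H _; rewrite HgE; exact: leq_trans Hig' (leqnSn _).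
    - by rewrite -ltnNge HgE ltnS.
  by right; exists g; [exact: (allP Hes g Hg) | split => //; exists (nth s w N.+1)].
have Hx : x \in w.
  by rewrite -Hlast -nth_last mem_nth // ltn_predL.
rewrite Hmem in Hx; case/hasP: Hx => g Hg Hxg.
apply: (@hopb_mono (c g)); first exact: count_size.
exact: (key (size w) g Hg (find_size _ _) x Hxg).
Qed.

End Hop.

Lemma hopf_map (T T' : finType) (E : {set {set T}}) (E' : {set {set T'}}) (f : T -> T') :
  (forall e, e \in E -> f @: e \in E') -> forall k u y, hopf E k u y -> hopf E' k (f u) (f y).
Proof.
move=> Hf; elim=> [|k IH] u y /=; first by move->.
case=> [H|[g Hg [Hu [z Hz H]]]]; first by left; exact: IH.
right; exists (f @: g); first exact: Hf.
split; first exact: imset_f.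
by exists (f z); [exact: imset_f | exact: IH].
Qed.

Lemma ex_min (P : nat -> Prop) :
  (exists k, P k) -> exists k, P k /\ forall k', P k' -> (k <= k')%N.
Proof.
case=> k; elim/ltn_ind: k => k IH Hk.
case: (Classical_Prop.classic (exists k', P k' /\ (k' < k)%N)) => [[k' [Hk' Hlt]]|Hno].
  exact: IH Hlt Hk'.
exists k; split => // k' Hk'; rewrite leqNgt; apply/negP => Hlt; apply: Hno.
by exists k'.
Qed.

Section FProps.
Variables (V : finType) (F : {set {set V}}).

Lemma pathlen_hopf s x k :
  (forall g, g \in F -> g != set0) -> pathlen F s x k -> hopf F k s x.
Proof.
move=> Hne [[-> ->]|[es [w [Hp <-]]]] /=; first by [].
apply: hopb_hopf; exact: path_hopb Hne Hp.
Qed.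

Lemma setdist_ex (e : {set V}) (x : V) :
  hconnected F -> (exists s, s \in e) -> exists k, setdist_is F e x k.
Proof.
move=> Hc [s0 Hs0].
have Hne : exists k, exists2 s, s \in e & dist_is F s x k.
  have [k0 Hk0] := Hc s0 x.
  have [k1 [Hk1 Hm1]] := ex_min (ex_intro (pathlen F s0 x) k0 Hk0).
  by exists k1, s0.
have [k [[s Hs Hd] Hmin]] := ex_min Hne.
by exists k; split; [exists s | move=> s' k' Hs' Hd'; apply: Hmin; exists s'].
Qed.

Lemma FE_near (r D : nat) :
  (1 <= r)%N -> uniform r F -> hconnected F -> in_FE F -> diam_is F D ->
  forall e h, e \in F -> h \in F ->
  exists x, x \in h /\ exists s, s \in e /\ exists k, (k < D)%N /\ pathlen F s x k.
Proof.
move=> Hr Hu Hc Hfe Hd e h He Hh.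
case: (Classical_Prop.classic (exists x, x \in h /\ exists s, s \in e /\
   exists k, (k < D)%N /\ pathlen F s x k)) => // Hno.
exfalso; apply: (Hfe D Hd e h He Hh) => x Hx.
have He0 : exists s, s \in e.
  have : (0 < #|e|)%N by rewrite (Hu e He).
  by case/card_gt0P => s Hs; exists s.
have [k [[s Hs Hds] Hmin]] := setdist_ex x Hc He0.
have HkD : (k <= D)%N := Hd.2 s x k Hds.
case: (ltnP k D) => HkD'.
  by exfalso; apply: Hno; exists x; split => //; exists s; split => //; exists k; split => //; exact: Hds.1.
have -> : D = k by apply/eqP; rewrite eqn_leq HkD' HkD.
by split; [exists s | exact: Hmin].
Qed.

End FProps.

Definition hascopy (V : finType) (F : {set {set V}}) (n : nat) (Ec : seq {set 'I_n}) : bool :=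
  [exists f : {ffun V -> 'I_n}, injectiveb f && [forall h in F, (f @: h) \in Ec]].

Definition goodset (V : finType) (F : {set {set V}}) (n : nat) (G : {set {set 'I_n}})
  : {set {set 'I_n}} :=
  [set g in G | [exists f : {ffun V -> 'I_n},
     [&& injectiveb f, [forall h in F, (f @: h) \in G] & [exists e in F, g == f @: e]]]].

Section Copies.
Variables (V : finType) (F : {set {set V}}) (n : nat).

Lemma hascopy_sound (G : {set {set 'I_n}}) (Ec : seq {set 'I_n}) :
  {subset Ec <= G} -> hascopy F Ec -> contains_copy F G.
Proof.
move=> Hs /existsP [f /andP [/injectiveP Hi /forallP Hf]]; exists f; split => // h Hh.
by apply: Hs; exact: (implyP (Hf h) Hh).
Qed.

Lemma hascopy_complete (Ec : seq {set 'I_n}) (f : V -> 'I_n) :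
  injective f -> (forall h, h \in F -> f @: h \in Ec) -> hascopy F Ec.
Proof.
move=> Hi Hf; apply/existsP; exists (finfun f); apply/andP; split.
  by apply/injectiveP => a b; rewrite !ffunE; exact: Hi.
apply/forallP => h; apply/implyP => Hh.
have -> : [set (finfun f) x | x in h] = f @: h by apply: eq_imset => z; rewrite ffunE.
exact: Hf.
Qed.

Lemma goodset_sub (G : {set {set 'I_n}}) : {subset goodset F G <= G}.
Proof. by move=> g; rewrite inE => /andP[]. Qed.

Lemma far_good (R : realType) (eps : R) r (G : {set {set 'I_n}}) :
  uniform r G -> (exists e, e \in F) -> far eps r F G ->
  eps * #|G|%:R <= #|goodset F G|%:R.
Proof.
move=> Hu [e0 He0] Hfar.
set B := goodset F G.
have HB := @goodset_sub G.
have H1 : uniform r (G :\: B) by move=> e; rewrite inE => /andP [_ He]; exact: Hu.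
have H2 : Ffree F (G :\: B).
  move=> [f [Hi Hf]].
  have := Hf e0 He0; rewrite inE => /andP [Hn HG]; move/negP: Hn; apply.
  rewrite inE HG /=; apply/existsP; exists (finfun f).
  have Ef (h : {set V}) : [set (finfun f) x | x in h] = f @: h by apply: eq_imset => z; rewrite ffunE.
  apply/and3P; split.
  - by apply/injectiveP => a b; rewrite !ffunE; exact: Hi.
  - apply/forallP => h; apply/implyP => Hh; rewrite Ef.
    by have := Hf h Hh; rewrite inE => /andP[].
  - by apply/existsP; exists e0; rewrite He0 Ef eqxx.
have := Hfar _ H1 H2.
have -> : G :\: (G :\: B) = B.
  apply/setP => g; rewrite !in_setD; case Hg: (g \in B); first by rewrite (HB _ Hg).
  by rewrite /= ?andbT; case: (g \in G).
have -> : (G :\: B) :\: G = set0.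
  by apply/setP => g; rewrite !in_setD in_set0; case: (g \in G); rewrite /= ?andbF.
by rewrite cards0 addn0.
Qed.

End Copies.

Section Count.
Variables (n r : nat) (G : {set {set 'I_n}}) (ord : 'I_n -> seq {set 'I_n}).
Hypothesis Hval : valid_order G ord.

Lemma count_ord (A : {set {set 'I_n}}) v :
  {subset A <= G} -> count (fun e => e \in A) (ord v) = #|[set e in A | v \in e]|.
Proof.
move=> HA; rewrite -size_filter.
have /card_uniqP <- := filter_uniq (fun e => e \in A) (Hval v).1.
apply: eq_card => e; rewrite mem_filter inE (Hval v).2.
by case He: (e \in A) => //=; rewrite (HA _ He).
Qed.

Lemma size_ord v : size (ord v) = deg G v.
Proof.
have := count_ord (A := G) v (fun e h => h).
rewrite /deg => <-; apply/esym/eqP; rewrite -all_count; apply/allP => e.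
by rewrite (Hval v).2 => /andP[].
Qed.

Lemma sum_card_inc (A : {set {set 'I_n}}) :
  uniform r A -> (\sum_(v : 'I_n) #|[set e in A | v \in e]| = r * #|A|)%N.
Proof.
move=> Hu.
have H1 v : #|[set e in A | v \in e]| = (\sum_(e in A) (v \in e))%N.
  rewrite -sum1_card (eq_bigl (fun e => (e \in A) && (v \in e))); last by move=> e; rewrite inE.
  by rewrite big_mkcondr /=; apply: eq_bigr => e _; case: (v \in e).
under eq_bigr do rewrite H1.
rewrite exchange_big /=.
rewrite (eq_bigr (fun _ => r)); first by rewrite sum_nat_const mulnC.
move=> e He; rewrite -(Hu e He) -sum1_card [RHS]big_mkcond /=.
by apply: eq_bigr => v _; case: (v \in e).
Qed.

Lemma sum_good (s : seq {set 'I_n}) (P : pred {set 'I_n}) (K : nat) :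
  (size s <= K)%N ->
  (\sum_(i < K) ((i < size s)%N && P (nth set0 s i)) = count P s)%N.
Proof.
move=> Hs.
transitivity (\sum_(i < K | (i < size s)%N) (P (nth set0 s i) : nat))%N.
  by rewrite [RHS]big_mkcond /=; apply: eq_bigr => i _; case: (i < size s)%N.
rewrite (big_ord_narrow (F := fun i : 'I_K => (P (nth set0 s i) : nat)) Hs) /=.
rewrite -sum1_count (big_nth set0) big_mkord [RHS]big_mkcond /=.
by apply: eq_bigr => i _; case: (P _).
Qed.

End Count.

Definition leaf (V : finType) (F : {set {set V}}) (n r K D : nat)
    (o : option {set 'I_n}) : alg n :=
  match o with
  | None => Ret n true
  | Some e0 => if #|e0| == r then
      explore r K D (enum e0) [::] (fun Ec => Ret n (~~ hascopy F Ec))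
    else Ret n true
  end.

Definition round (V : finType) (F : {set {set V}}) (n' r K' D : nat) : alg n'.+1 :=
  QRand (fun v : 'I_n'.+1 => QRand (fun i : 'I_K'.+1 => QNb v i (leaf F r K'.+1 D))).

Fixpoint rep (n : nat) (A : alg n) (T : nat) : alg n :=
  if T is T'.+1 then subst A (rep A T') else Ret n true.

Lemma acc_rep n (R : realType) G ord (A : alg n) T :
  acc_prob R G ord (rep A T) = acc_prob R G ord A ^+ T.
Proof. by elim: T => [|T IH] /=; [rewrite expr0 | rewrite acc_subst IH exprS]. Qed.

Lemma nq_rep n (A : alg n) T : (nqueries (rep A T) <= T * nqueries A)%N.
Proof.
elim: T => [|T IH] /=; first by rewrite mul0n.
by apply: leq_trans (nq_subst _ _) _; rewrite mulSn leq_add2l.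
Qed.

Lemma nq_leaf V F n r K D o : (nqueries (@leaf V F n r K D o) <= r * qb r K D)%N.
Proof.
case: o => [e0|] /=; last exact: leq0n.
case: eqP => He; last exact: leq0n.
have := nq_explore r K D (enum e0) [::] (cont := fun Ec => Ret n (~~ hascopy F Ec))
  (b := 0%N) (fun _ => leqnn 0).
by rewrite -cardE He addn0.
Qed.

Lemma nq_round V F n' r K' D : (nqueries (@round V F n' r K' D) <= (1 + r * K'.+1) ^ D)%N.
Proof.
rewrite /round /=; apply/bigmax_leqP => v _; apply/bigmax_leqP => i _.
apply: leq_trans _ (qb_bound r K'.+1 D); rewrite addn1 ltnS.
apply/bigmax_leqP => o _; exact: nq_leaf.
Qed.

Lemma bern (R : realType) (p : R) T : 0 <= p -> p <= 1 ->
  (1 - p) ^+ T * (1 + p * T%:R) <= 1.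
Proof.
move=> h0 h1; elim: T => [|T IH]; first by rewrite expr0 mulr0 addr0 mul1r.
rewrite exprSr -natr1.
have hq : 0 <= (1 - p) ^+ T by apply: exprn_ge0; lra.
have ht : 0 <= T%:R :> R by [].
have key : (1 - p) * (1 + p * (T%:R + 1)) <= 1 + p * T%:R.
  have : 0 <= p * p * (T%:R + 1) by apply: mulr_ge0; [apply: mulr_ge0 | lra].
  lra.
rewrite -mulrA; apply: le_trans (ler_wpM2l hq key) IH.
Qed.

Lemma avg_nonempty (R : realType) n (G : {set {set 'I_n}}) (d : R) :
  avgdeg R G = d -> 0 < d -> exists e, e \in G.
Proof.
move=> Havg hd; case: (Classical_Prop.classic (exists e, e \in G)) => // Hno.
exfalso; have : avgdeg R G = 0.
  rewrite /avgdeg big1 ?mul0r // => v _.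
  have -> : deg G v = 0%N.
    apply/eqP; rewrite cards_eq0; apply/eqP/setP => e; rewrite !inE.
    case He: (e \in G) => //=; by exfalso; apply: Hno; exists e.
  by [].
by rewrite Havg => hd0; rewrite hd0 ltxx in hd.
Qed.

Unset Implicit Arguments. Set Strict Implicit.

Lemma sub_nil (T : finType) (A : {set T}) : {subset ([::] : seq T) <= A}.
Proof. by move=> x; rewrite in_nil. Qed.

Theorem proposition4p7 (R : realType) (eps : R) (heps : 0 < eps)
    (r : nat) (hr : (2 <= r)%N)
    (V : finType) (F : {set {set V}})
    (hFunif : uniform r F) (hFconn : hconnected F) (hFE : in_FE F)
    (D : nat) (hD : diam_is F D)
    (c : R) (hc : 0 < c) :
  exists C : R, forall (n : nat) (d : R), 0 < d ->
    exists A : alg n,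
      (nqueries A)%:R <= C * (Num.max 1 d) ^+ D /\
      forall (G : {set {set 'I_n}}) (ord : 'I_n -> seq {set 'I_n}),
        uniform r G -> valid_order G ord ->
        avgdeg R G = d -> (maxdeg G)%:R <= c * d ->
        (Ffree F G -> 2 / 3 <= acc_prob R G ord A) /\
        (far eps r F G -> 2 / 3 <= 1 - acc_prob R G ord A).
Proof.
have hr1 : (0 < r)%N by apply: leq_trans hr.
have h2c : 0 < 2 * c by rewrite mulr_gt0 ?ltr0Sn.
pose p := eps / (2 * c).
have hp : 0 < p by rewrite /p divr_gt0.
have hpc : p * (2 * c) = eps by rewrite /p divfK // lt0r_neq0.
pose T := (Num.truncn (2 / p)).+1.
have hT : 2 <= p * T%:R.
  have h := truncnS_gt (2 / p); rewrite -/T in h.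
  by rewrite mulrC -ler_pdivrMr //; exact: ltW.
have hA0 : 0 <= 1 + r%:R * (c + 1) :> R.
  by apply: addr_ge0 => //; apply: mulr_ge0 => //; apply: addr_ge0 => //; exact: ltW.
exists (T%:R * (1 + r%:R * (c + 1)) ^+ D).
move=> n d hd.
pose M := Num.max 1 d.
have hM1 : 1 <= M by rewrite le_max lexx.
have hMd : d <= M by rewrite le_max lexx orbT.
have hC0 : 0 <= T%:R * (1 + r%:R * (c + 1)) ^+ D * M ^+ D.
  apply: mulr_ge0; first apply: mulr_ge0 => //; apply: exprn_ge0 => //.
  exact: le_trans ler01 hM1.
case: n => [|n'].
  exists (Ret 0 true); split; first exact: hC0.
  move=> G ord _ _ Havg _.
  have : avgdeg R G = 0 by rewrite /avgdeg big_ord0 mul0r.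
  by rewrite Havg => hd0; rewrite hd0 ltxx in hd.
case: (set_0Vmem F) => [F0|[e0 He0]].
  exists (Ret n'.+1 (~~ hascopy F ([::] : seq {set 'I_n'.+1}))); split; first exact: hC0.
  move=> G ord Hu Hval Havg Hmax; split.
    move=> Hfree /=.
    have -> : hascopy F ([::] : seq {set 'I_n'.+1}) = false.
      apply/negbTE/negP => Hc; apply: Hfree.
      exact: (hascopy_sound (@sub_nil _ G) Hc).
    by rewrite /=; lra.
  move=> Hfar /=.
  case Hc: (hascopy F _) => /=; first by lra.
  exfalso.
  have Hfree : Ffree F G.
    move=> [f [Hi Hf]]; move/negbT/negP: Hc; apply.
    by apply: (hascopy_complete (f := f)) => // h; rewrite F0 inE.
  have := Hfar G Hu Hfree; rewrite setDv cards0 addn0.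
  have [e He] := avg_nonempty Havg hd.
  have hG : (0 < #|G|)%N by apply/card_gt0P; exists e.
  have : 0 < eps * #|G|%:R by rewrite mulr_gt0 // ltr0n.
  lra.
pose K' := Num.truncn (c * d).
exists (rep (round F n' r K' D) T); split.
  have h1 := nq_rep (round F n' r K' D) T.
  have h2 := nq_round F n' r K' D.
  have h3 := leq_trans h1 (leq_mul (leqnn T) h2).
  apply: le_trans (_ : (T * (1 + r * K'.+1) ^ D)%:R <= _); first by rewrite ler_nat.
  rewrite natrM natrX natrD natrM mulr1n -mulrA -exprMn.
  apply: ler_wpM2l => //.
  have hK : K'.+1%:R <= c * d + 1.
    rewrite -natr1 lerD2r truncn_le; apply: mulr_ge0; exact: ltW.
  have hcM : c * d <= c * M by apply: ler_wpM2l => //; exact: ltW.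
  have hrK : r%:R * K'.+1%:R <= r%:R * (c * M + M) :> R.
    by apply: ler_wpM2l => //; lra.
  have hmain : 1 + r%:R * K'.+1%:R <= (1 + r%:R * (c + 1)) * M :> R by lra.
  apply: lerXn2r; rewrite ?nnegrE //.
  all: try exact: hmain.
  all: try (apply: addr_ge0 => //; apply: mulr_ge0 => //).
  all: try (apply: mulr_ge0 => //; exact: le_trans ler01 hM1).
move=> G ord Hu Hval Havg Hmax.
have [eG HeG] := avg_nonempty Havg hd.
have Hdeg v : (deg G v <= K')%N.
  apply: leq_trans (leq_bigmax (F := deg G) v) _.
  rewrite /K' truncn_ge_nat; first exact: Hmax.
  by apply: mulr_ge0; exact: ltW.
have HK v : (size (ord v) <= K'.+1)%N.
  by rewrite (size_ord Hval); exact: leq_trans (Hdeg v) (leqnSn _).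
have Hcd : 1 <= c * d.
  have [v Hv] : exists v, v \in eG.
    by apply/card_gt0P; rewrite (Hu eG HeG).
  have h1 : (1 <= deg G v)%N by apply/card_gt0P; exists eG; rewrite inE HeG Hv.
  apply: le_trans Hmax; rewrite ler1n.
  exact: leq_trans h1 (leq_bigmax (F := deg G) v).
pose a (v : 'I_n'.+1) (i : 'I_K'.+1) :=
  acc_prob R G ord (leaf F r K'.+1 D (nb_answer ord v i)).
have Eround : acc_prob R G ord (round F n' r K' D) =
    (\sum_(v : 'I_n'.+1) ((\sum_(i : 'I_K'.+1) a v i) / K'.+1%:R)) / n'.+1%:R by [].
split.
  move=> Hfree; rewrite acc_rep.
  have Hleaf v i : a v i = 1.
    rewrite /a /leaf /nb_answer; case: ifP => Hi //; case: ifP => Hr' //.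
    rewrite acc_explore /=; case Hc: (hascopy F _) => //=.
    exfalso; apply: Hfree; exact: (hascopy_sound (exres_inG Hval (@sub_nil _ G)) Hc).
  have Hin v : (\sum_(i : 'I_K'.+1) a v i) / K'.+1%:R = 1.
    rewrite (eq_bigr (fun _ => 1)); last by move=> i _; exact: Hleaf.
    by rewrite sumr_const card_ord divff // pnatr_eq0.
  have -> : acc_prob R G ord (round F n' r K' D) = 1.
    rewrite Eround (eq_bigr (fun _ => 1)); last by move=> v _; exact: Hin.
    by rewrite sumr_const card_ord divff // pnatr_eq0.
  by rewrite expr1n; lra.
move=> Hfar.
have Hgood := far_good Hu (ex_intro _ e0 He0) Hfar.
set B := goodset F G in Hgood.
have HBG : {subset B <= G} := @goodset_sub V F n'.+1 G.
have HuB : uniform r B by move=> g /HBG; exact: Hu.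
pose gd (v : 'I_n'.+1) (i : 'I_K'.+1) :=
  ((i < size (ord v))%N && (nth set0 (ord v) i \in B) : nat).
have Hne g : g \in F -> g != set0.
  by move=> Hg; rewrite -card_gt0 (hFunif g Hg).
have Ha v i : a v i <= 1 - (gd v i)%:R.
  rewrite /a /gd.
  case: (boolP ((i < size (ord v))%N && (nth set0 (ord v) i \in B))) => /=;
    last by move=> _; rewrite mulr0n subr0 acc_le1.
  move=> /andP [Hi HB]; rewrite mulr1n subrr.
  rewrite /leaf /nb_answer Hi.
  set e := nth set0 (ord v) i in HB *.
  have HeG' : e \in G := HBG _ HB.
  rewrite /= (Hu e HeG') eqxx acc_explore /=.
  case Hc: (hascopy F _) => //=; exfalso; move/negbT/negP: Hc; apply.
  move: HB; rewrite inE => /andP [_ /existsP [f /and3P [/injectiveP Hinj /forallP Hall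
     /existsP [e1 /andP [He1 /eqP Hee]]]]].
  have HallG h : h \in F -> f @: h \in G by move=> Hh; exact: (implyP (Hall h) Hh).
  apply: (hascopy_complete (f := f)) => // h Hh.
  have [x [Hx [s [Hs [k [Hk Hpl]]]]]] := FE_near hr1 hFunif hFconn hFE hD He1 Hh.
  have Hhop := hopf_map HallG (pathlen_hopf Hne Hpl).
  apply: (exres_reach Hval Hu HK [::] (k := k) (u := f s) (y := f x)) => //.
  all: try (by rewrite mem_enum Hee; exact: imset_f).
  exact: (HallG h Hh).
  by apply/imsetP; exists x.
have Hcnt : (\sum_(v : 'I_n'.+1) \sum_(i : 'I_K'.+1) gd v i = r * #|B|)%N.
  rewrite -(sum_card_inc HuB); apply: eq_bigr => v _.
  rewrite /gd (sum_good (fun e => e \in B) (HK v)).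
  by rewrite (count_ord Hval).
have Hsumdeg : (\sum_(v : 'I_n'.+1) deg G v = r * #|G|)%N.
  by rewrite /deg; exact: sum_card_inc Hu.
have Havg' : \sum_(v : 'I_n'.+1) (deg G v)%:R = n'.+1%:R * d :> R.
  by rewrite -Havg /avgdeg mulrC divfK // pnatr_eq0.
pose Y := \sum_(v : 'I_n'.+1) \sum_(i : 'I_K'.+1) ((gd v i)%:R : R).
have HY : Y = (\sum_(v : 'I_n'.+1) \sum_(i : 'I_K'.+1) gd v i)%:R.
  by rewrite /Y natr_sum; apply: eq_bigr => v _; rewrite natr_sum.
have Hc1 : eps * (n'.+1%:R * d) <= Y.
  rewrite HY Hcnt natrM -Havg' -natr_sum Hsumdeg natrM mulrCA.
  by apply: ler_wpM2l => //.
pose S := \sum_(v : 'I_n'.+1) \sum_(i : 'I_K'.+1) a v i.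
pose X := \sum_(v : 'I_n'.+1) \sum_(i : 'I_K'.+1) (1 - (gd v i)%:R : R).
have HS : S <= X by apply: ler_sum => v _; apply: ler_sum => i _; exact: Ha.
have E2 : X + Y = n'.+1%:R * K'.+1%:R.
  have Ein v : \sum_(i : 'I_K'.+1) (1 - (gd v i)%:R : R) + \sum_(i : 'I_K'.+1) (gd v i)%:R
      = K'.+1%:R.
    rewrite -big_split /= (eq_bigr (fun _ => 1)); last by move=> i _; rewrite subrK.
    by rewrite sumr_const card_ord.
  rewrite /X /Y -big_split /= (eq_bigr (fun _ => K'.+1%:R)); last by move=> v _; exact: Ein.
  by rewrite sumr_const card_ord mulr_natl.
set accR := acc_prob R G ord (round F n' r K' D).
have hacc0 : 0 <= accR by exact: acc_ge0.
have hN : 0 < n'.+1%:R :> R by rewrite ltr0Sn.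
have hKp : 0 < K'.+1%:R :> R by rewrite ltr0Sn.
have E : accR * (K'.+1%:R * n'.+1%:R) = S.
  rewrite /accR Eround -mulr_suml /S; field.
  by rewrite !nat1r !pnatr_eq0.
have hK : K'.+1%:R <= c * d + 1.
  rewrite -natr1 lerD2r truncn_le; apply: mulr_ge0; exact: ltW.
have hKr : K'.+1%:R <= 2 * c * d by lra.
have h1 : accR * K'.+1%:R * n'.+1%:R <= (K'.+1%:R - eps * d) * n'.+1%:R by lra.
have h2 : accR * K'.+1%:R <= K'.+1%:R - eps * d by rewrite -(ler_pM2r hN).
have h3 : p * K'.+1%:R <= p * (2 * c * d) by apply: ler_wpM2l => //; exact: ltW.
have hpcd : p * (2 * c * d) = eps * d by rewrite mulrA hpc.
have h4 : accR * K'.+1%:R <= (1 - p) * K'.+1%:R by lra.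
have h5 : accR <= 1 - p by rewrite -(ler_pM2r hKp).
rewrite acc_rep -/accR.
have hq0 : 0 <= 1 - p by lra.
have hpow : accR ^+ T <= (1 - p) ^+ T by apply: lerXn2r; rewrite ?nnegrE.
have hp1 : p <= 1 by lra.
have hbern := @bern R p T (ltW hp) hp1.
have hqT : 2 * (1 - p) ^+ T <= (1 - p) ^+ T * (p * T%:R).
  by rewrite mulrC; apply: ler_wpM2l => //; exact: exprn_ge0.
lra.
Qed.
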